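(* For any oriented graph $G$, $\omega_{ro}(G) \leq \chi^*_o(G) \leq \chi_o(G)$.
   Context: An oriented graph is a finite directed graph with no directed cycle of length 1 or 2. A homomorphism of an oriented graph $G$ to an oriented graph $H$ is a map $f:V(G)\to V(H)$ such that $f(x)f(y)$ is an arc of $H$ whenever $xy$ is an arc of $G$. An oriented relative clique of $G$ is a set $R\subseteq V(G)$ such that $f(x)\neq f(y)$ for every homomorphism $f$ of $G$ to any oriented graph and all distinct $x,y\in R$; $\omega_{ro}(G)$ is the maximum size of an oriented relative clique. For a set $S$ of $k$ colors, a $b$-fold oriented $k$-coloring of $G$ is a map $f$ from $V(G)$ to the $b$-element subsets of $S$ such that (i) $f(x)\cap f(y)=\emptyset$ for every arc $xy$, and (ii) for all arcs $xy, zw$, $f(x)\cap f(w)\neq\emptyset$ implies $f(y)\cap f(z)=\emptyset$. $\chi^b_o(G)$ is the minimum $k$ admitting such a coloring; $\chi_o(G)=\chi^1_o(G)$ is the oriented chromatic number, and $\chi^*_o(G)=\lim_{b\to\infty}\chi^b_o(G)/b=\inf_{b\ge1}\chi^b_o(G)/b$ is the fractional oriented chromatic number. *)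

(* Defs.v *)
From HB Require Import structures.
From mathcomp Require Import all_boot all_order all_algebra.
From mathcomp Require Import boolp classical_sets reals.
Set Implicit Arguments. Unset Strict Implicit. Unset Printing Implicit Defensive.
Import Order.TTheory GRing.Theory Num.Theory.

Definition oriented (V : finType) (a : rel V) : Prop :=
  (forall x, ~~ a x x) /\ (forall x y, a x y -> ~~ a y x).

Definition is_hom (V W : finType) (a : rel V) (h : rel W) (f : V -> W) : Prop :=
  forall x y, a x y -> h (f x) (f y).

Definition oriented_relative_clique (V : finType) (a : rel V) (R : {set V}) : Prop :=
  forall (W : finType) (h : rel W), oriented h ->
  forall f : V -> W, is_hom a h f ->
  forall x y, x \in R -> y \in R -> x != y -> f x != f y.

Definition omega_ro (V : finType) (a : rel V) : nat :=
  \max_(R : {set V} | `[< oriented_relative_clique a R >]) #|R|.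

Definition bfold_oriented_coloring (V : finType) (a : rel V) (b k : nat)
    (f : V -> {set 'I_k}) : Prop :=
  (forall x, #|f x| = b) /\
  (forall x y, a x y -> [disjoint f x & f y]) /\
  (forall x y z w, a x y -> a z w -> ~~ [disjoint f x & f w] ->
     [disjoint f y & f z]).

Local Open Scope ring_scope.
Local Open Scope classical_set_scope.

Definition chi_b (R : realType) (V : finType) (a : rel V) (b : nat) : R :=
  inf [set (k%:R : R) | k in
        [set k : nat | exists f : V -> {set 'I_k}, bfold_oriented_coloring a b f]].

Definition chi_o (R : realType) (V : finType) (a : rel V) : R := chi_b R a 1.

Definition chi_star (R : realType) (V : finType) (a : rel V) : R :=
  inf [set chi_b R a b / b%:R | b in [set b : nat | (1 <= b)%N]].

(* Main.v *)
Require Import Defs.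
From mathcomp Require Import all_boot all_order all_algebra.
From mathcomp Require Import boolp classical_sets reals.
Import Order.TTheory GRing.Theory Num.Theory.
Local Open Scope ring_scope.

Lemma notdisj_ex (T : finType) (A B : {set T}) :
  ~~ [disjoint A & B] -> exists c, c \in A /\ c \in B.
Proof.
rewrite -setI_eq0 => /set0Pn [c]; rewrite inE => /andP [? ?]; by exists c.
Qed.

Lemma coloring_exists (V : finType) (a : rel V) (b : nat) :
  oriented a -> exists k (f : V -> {set 'I_k}), bfold_oriented_coloring a b f.
Proof.
move=> [Hl Ha].
pose f := fun x : V => [set enum_rank (x, j) | j : 'I_b].
have meet : forall x y, ~~ [disjoint f x & f y] -> x = y.
  move=> x y /notdisj_ex [c [/imsetP [j _ ->] /imsetP [j' _]]].
  by move/enum_rank_inj => [].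
exists _, f; split; [|split].
- move=> x; rewrite card_imset ?card_ord //.
  by move=> j j' /enum_rank_inj [].
- move=> x y axy; apply/negPn/negP => /meet exy.
  by subst; rewrite (negbTE (Hl _)) in axy.
- move=> x y z w axy azw /meet exw; apply/negPn/negP => /meet eyz.
  subst; by move: (Ha _ _ axy); rewrite azw.
Qed.

Lemma clique_bound (V : finType) (a : rel V) (b k : nat)
  (f : V -> {set 'I_k}) (S : {set V}) :
  bfold_oriented_coloring a b f -> oriented_relative_clique a S ->
  (#|S| * b <= k)%N.
Proof.
move=> [Hc [Hd Hx]] Hcl.
case: (posnP b) => [->|bpos]; first by rewrite muln0.
have sel : forall v, exists i, i \in f v.
  move=> v; apply/set0Pn; rewrite -card_gt0 Hc //.
have disj : {in S &, forall i j, j != i -> [disjoint f i & f j]}.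
  move=> x y xS yS nxy; apply/negPn/negP => /notdisj_ex [c [cx cy]].
  pose g := fun v => if c \in f v then c else xchoose (sel v).
  have gin : forall v, g v \in f v.
    by move=> v; rewrite /g; case: ifP => // _; apply: xchooseP.
  pose h := fun i j : 'I_k => [exists u, exists v, [&& a u v, g u == i & g v == j]].
  have hor : oriented h.
    split.
    - move=> i; apply/negP => /existsP [u /existsP [v /and3P [auv /eqP gu /eqP gv]]].
      move: (Hd _ _ auv); rewrite -setI_eq0 => /eqP/setP/(_ i).
      by rewrite inE -{1}gu -gv !gin inE.
    - move=> i j /existsP [u /existsP [v /and3P [auv /eqP gu /eqP gv]]].
      apply/negP => /existsP [z /existsP [w /and3P [azw /eqP gz /eqP gw]]].
      have : ~~ [disjoint f u & f w].
        rewrite -setI_eq0; apply/set0Pn; exists i; rewrite inE.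
        by rewrite -{1}gu -gw !gin.
      move/(Hx _ _ _ _ auv azw); rewrite -setI_eq0 => /eqP/setP/(_ j).
      by rewrite inE -{1}gv -gz !gin inE.
  have hhom : is_hom a h g.
    by move=> u v auv; apply/existsP; exists u; apply/existsP; exists v; rewrite auv !eqxx.
  move: (Hcl _ _ hor g hhom y x yS xS nxy).
  by rewrite /g cx cy eqxx.
have P0 : finset.set0 \notin f @: S.
  apply/imsetP => [[x _ ex]]; move: (Hc x); rewrite -ex cards0 => b0.
  by move: bpos; rewrite -b0.
have [tP inj] := trivIimset disj P0.
have : (#|finset.cover (f @: S)| <= k)%N by apply: leq_trans (max_card _) _; rewrite card_ord.
move/eqnP: tP => <-.
rewrite (eq_bigr (fun _ => b)); last first.
  by move=> B /imsetP [x _ ->]; rewrite Hc.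
by rewrite sum_nat_const card_in_imset // mulnC.
Qed.

Lemma chi_b_lb (R : realType) (V : finType) (a : rel V) (b m : nat) :
  oriented a ->
  (forall k (f : V -> {set 'I_k}), bfold_oriented_coloring a b f -> (m <= k)%N) ->
  (m%:R : R) <= chi_b R a b.
Proof.
move=> Ho Hm; rewrite /chi_b; apply: lb_le_inf.
  have [k [f Hf]] := @coloring_exists V a b Ho.
  by exists (k%:R); exists k => //; exists f.
move=> y [k [f Hf] <-]; rewrite ler_nat; exact: Hm Hf.
Qed.

Theorem theorem3 (R : realType) (V : finType) (a : rel V) :
  oriented a ->
  (omega_ro a)%:R <= chi_star R a /\ chi_star R a <= chi_o R a.
Proof.
move=> Ho.
have ge0 : forall b, 0 <= chi_b R a b.
  by move=> b; have := @chi_b_lb R V a b 0 Ho (fun _ _ _ => leq0n _).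
split.
- rewrite /chi_star; apply: lb_le_inf.
    by exists (chi_b R a 1 / 1%:R); exists 1%N.
  move=> y [b /= b1 <-].
  have bpos : (0 : R) < b%:R by rewrite ltr0n.
  rewrite ler_pdivlMr // -natrM; apply: chi_b_lb => // k f Hf.
  rewrite /omega_ro.
  elim/big_ind: _ => //.
    by move=> x1 x2 h1 h2; rewrite maxnMl geq_max h1 h2.
  move=> S /asboolP HS; exact: clique_bound Hf HS.
- rewrite /chi_star; apply: ge_inf.
    exists 0 => y [b /= b1 <-]; apply: divr_ge0 => //; exact: ge0.
  by exists 1%N => //; rewrite divr1.
Qed.
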